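(* $\frac{2}{11}\le\gamma^{L-LD}(\mathcal{T})\le\frac29$: every local locating-dominating code in the triangular grid has density at least $2/11$, and there is a local locating-dominating code in the triangular grid of density $2/9$.
   Context: The triangular grid $\mathcal{T}$ has vertex set $\mathbb{Z}^2$, with $\mathbf{u},\mathbf{v}$ adjacent iff $\mathbf{u}-\mathbf{v}\in\{(\pm1,0),(0,\pm1),(1,1),(-1,-1)\}$. For a nonempty $C\subseteq\mathbb{Z}^2$ and vertex $\mathbf{u}$, $I(\mathbf{u})=N[\mathbf{u}]\cap C$ where $N[\mathbf{u}]$ is the closed neighbourhood. $C$ is a local locating-dominating code if $I(\mathbf{u})\ne\emptyset$ for all $\mathbf{u}$ and $I(\mathbf{u})\ne I(\mathbf{v})$ for all adjacent $\mathbf{u},\mathbf{v}\notin C$. The density of $C$ is $D(C)=\limsup_{n\to\infty}|C\cap Q_n|/|Q_n|$ with $Q_n=\{(i,j)\in\mathbb{Z}^2:|i|\le n,|j|\le n\}$. $\gamma^{L-LD}(G)$ denotes the infimum of densities of local locating-dominating codes in $G$. *)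

(* Defs.v *)
From Stdlib Require Import Reals ZArith List ClassicalEpsilon.
From Coquelicot Require Import Coquelicot.
Open Scope R_scope.

Definition vtx := (Z * Z)%type.

Definition tri_adj (u v : vtx) : Prop :=
  let d := ((fst u - fst v)%Z, (snd u - snd v)%Z) in
  d = (1%Z, 0%Z) \/ d = ((-1)%Z, 0%Z) \/ d = (0%Z, 1%Z) \/ d = (0%Z, (-1)%Z)
  \/ d = (1%Z, 1%Z) \/ d = ((-1)%Z, (-1)%Z).

Definition closed_nbhd (u : vtx) (w : vtx) : Prop := w = u \/ tri_adj u w.

Definition I_set (C : vtx -> Prop) (u : vtx) (w : vtx) : Prop :=
  closed_nbhd u w /\ C w.

Definition local_LD_code (C : vtx -> Prop) : Prop :=
  (exists c, C c) /\
  (forall u, exists w, I_set C u w) /\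
  (forall u v, tri_adj u v -> ~ C u -> ~ C v ->
     ~ (forall w, I_set C u w <-> I_set C v w)).

Definition zrange (n : nat) : list Z :=
  map (fun k => (Z.of_nat k - Z.of_nat n)%Z) (seq 0 (2 * n + 1)).
Definition Q_list (n : nat) : list vtx := list_prod (zrange n) (zrange n).

Definition indicator (C : vtx -> Prop) (p : vtx) : R :=
  if excluded_middle_informative (C p) then 1 else 0.

Definition count_in_Q (C : vtx -> Prop) (n : nat) : R :=
  fold_right Rplus 0 (map (indicator C) (Q_list n)).

Definition card_Q (n : nat) : R := (INR (2 * n + 1)) ^ 2.

Definition density (C : vtx -> Prop) : Rbar :=
  LimSup_seq (fun n => count_in_Q C n / card_Q n).

(* Main.v *)
Require Import Defs.
From Stdlib Require Import Reals Lra Lia ZArith List ClassicalEpsilon.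
From Coquelicot Require Import Coquelicot.
Open Scope R_scope.

Lemma lim_aux (a b : R) : is_lim_seq (fun n => a + b * / INR (2*n+1)) a.
Proof.
  assert (H1 : is_lim_seq (fun n => INR (2*n+1)) p_infty).
  { apply is_lim_seq_le_p_loc with (u := INR).
    - exists O. intros n _. apply le_INR. lia.
    - apply is_lim_seq_INR. }
  assert (H2 := is_lim_seq_inv _ _ H1 ltac:(discriminate)).
  simpl in H2.
  assert (H3 := is_lim_seq_scal_l _ b _ H2). simpl in H3. rewrite Rmult_0_r in H3.
  assert (H4 := is_lim_seq_plus' _ _ a 0 (is_lim_seq_const a) H3).
  rewrite Rplus_0_r in H4. exact H4.
Qed.

Fixpoint sZ (a : Z) (k : nat) (g : Z -> R) : R :=
  match k with O => 0 | S k => g a + sZ (a+1)%Z k g end.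

Lemma sZ_ext a k g1 g2 : (forall t, g1 t = g2 t) -> sZ a k g1 = sZ a k g2.
Proof. intro H; revert a; induction k; intro a; simpl; auto. rewrite H, IHk; auto. Qed.

Lemma sZ_le a k g1 g2 : (forall t, g1 t <= g2 t) -> sZ a k g1 <= sZ a k g2.
Proof. intro H; revert a; induction k; intro a; simpl. lra. specialize (IHk (a+1)%Z). specialize (H a). lra. Qed.

Lemma sZ_nonneg a k g : (forall t, 0 <= g t) -> 0 <= sZ a k g.
Proof. intro H; revert a; induction k; intro a; simpl. lra. specialize (IHk (a+1)%Z). specialize (H a). lra. Qed.

Lemma sZ_plus a k g1 g2 : sZ a k (fun t => g1 t + g2 t) = sZ a k g1 + sZ a k g2.
Proof. revert a; induction k; intro a; simpl. lra. rewrite IHk. lra. Qed.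

Lemma sZ_scal a k c g : sZ a k (fun t => c * g t) = c * sZ a k g.
Proof. revert a; induction k; intro a; simpl. lra. rewrite IHk. lra. Qed.

Lemma sZ_const a k c : sZ a k (fun _ => c) = INR k * c.
Proof. revert a; induction k; intro a; simpl. lra. rewrite IHk. destruct k; simpl; lra. Qed.

Lemma sZ_zero a k : sZ a k (fun _ => 0) = 0.
Proof. rewrite sZ_const; lra. Qed.

Lemma sZ_split a k m g : sZ a (k+m) g = sZ a k g + sZ (a + Z.of_nat k)%Z m g.
Proof.
  revert a; induction k; intro a; simpl.
  - rewrite Z.add_0_r; lra.
  - rewrite IHk. replace (a + 1 + Z.of_nat k)%Z with (a + Z.pos (Pos.of_succ_nat k))%Z by lia. lra.
Qed.

Lemma sZ_shift a k e g : sZ a k (fun t => g (t + e)%Z) = sZ (a + e)%Z k g.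
Proof.
  revert a; induction k; intro a; simpl; auto. rewrite IHk.
  replace (a + 1 + e)%Z with (a + e + 1)%Z by lia. reflexivity.
Qed.

Lemma sZ_sub g a b k k' : (forall t, 0 <= g t) -> (a <= b)%Z ->
  (b + Z.of_nat k <= a + Z.of_nat k')%Z -> sZ b k g <= sZ a k' g.
Proof.
  intros Hg H1 H2.
  set (p := Z.to_nat (b - a)).
  assert (Hb : b = (a + Z.of_nat p)%Z) by (unfold p; lia).
  set (r := (k' - p - k)%nat).
  assert (Hk : k' = (p + (k + r))%nat) by (unfold r, p in *; lia).
  rewrite Hk, sZ_split, sZ_split, <- Hb.
  pose proof (sZ_nonneg a p g Hg). pose proof (sZ_nonneg (b + Z.of_nat k)%Z r g Hg). lra.
Qed.

Definition box (n : nat) (F : vtx -> R) : R :=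
  sZ (- Z.of_nat n) (2*n+1) (fun i => sZ (- Z.of_nat n) (2*n+1) (fun j => F (i,j))).

Lemma box_ext n F G : (forall u, F u = G u) -> box n F = box n G.
Proof. intro H; unfold box; apply sZ_ext; intro; apply sZ_ext; auto. Qed.
Lemma box_le n F G : (forall u, F u <= G u) -> box n F <= box n G.
Proof. intro H; unfold box; apply sZ_le; intro; apply sZ_le; auto. Qed.
Lemma box_nonneg n F : (forall u, 0 <= F u) -> 0 <= box n F.
Proof. intro H; unfold box; apply sZ_nonneg; intro; apply sZ_nonneg; auto. Qed.
Lemma box_plus n F G : box n (fun u => F u + G u) = box n F + box n G.
Proof. unfold box. rewrite <- sZ_plus. apply sZ_ext; intro. apply sZ_plus. Qed.
Lemma box_scal n c F : box n (fun u => c * F u) = c * box n F.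
Proof. unfold box. rewrite <- sZ_scal. apply sZ_ext; intro. apply sZ_scal. Qed.
Lemma box_const n c : box n (fun _ => c) = INR (2*n+1) ^ 2 * c.
Proof. unfold box. rewrite (sZ_ext _ _ _ (fun _ => INR (2*n+1) * c)) by (intro; apply sZ_const).
  rewrite sZ_const. ring. Qed.

Definition sh (u : vtx) (a b : Z) : vtx := ((fst u + a)%Z, (snd u + b)%Z).

Lemma box_shift_le n F a b : (forall u, 0 <= F u) -> (-1 <= a <= 1)%Z -> (-1 <= b <= 1)%Z ->
  box n (fun u => F (sh u a b)) <= box (S n) F.
Proof.
  intros HF Ha Hb. unfold box, sh; cbn [fst snd].
  apply Rle_trans with (sZ (- Z.of_nat n) (2*n+1)
     (fun i => sZ (- Z.of_nat (S n)) (2 * S n + 1) (fun j => F ((i + a)%Z, j)))).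
  - apply sZ_le; intro i.
    rewrite (sZ_shift _ _ b (fun j => F ((i+a)%Z, j))).
    apply sZ_sub; [intro; apply HF | lia | lia].
  - rewrite (sZ_shift _ _ a (fun i => sZ (- Z.of_nat (S n)) (2 * S n + 1) (fun j => F (i, j)))).
    apply sZ_sub; [intro; apply sZ_nonneg; intro; apply HF | lia | lia].
Qed.

Definition sumL (L : list (Z*Z)) (f : Z*Z -> R) : R := fold_right Rplus 0 (map f L).

Lemma box_sumL n L (f : Z*Z -> vtx -> R) :
  box n (fun u => sumL L (fun d => f d u)) = sumL L (fun d => box n (f d)).
Proof.
  induction L; simpl.
  - unfold box. rewrite (sZ_ext _ _ _ (fun _ => 0)) by (intro; apply sZ_zero). apply sZ_zero.
  - unfold sumL in *; simpl. rewrite (box_plus n (f a) (fun u => fold_right Rplus 0 (map (fun d => f d u) L))), IHL. reflexivity.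
Qed.

Lemma sum_app (l m : list R) : fold_right Rplus 0 (l ++ m) = fold_right Rplus 0 l + fold_right Rplus 0 m.
Proof. induction l; simpl; lra. Qed.

Lemma fold_prod (l1 l2 : list Z) (F : vtx -> R) :
  fold_right Rplus 0 (map F (list_prod l1 l2)) =
  fold_right Rplus 0 (map (fun x => fold_right Rplus 0 (map (fun y => F (x,y)) l2)) l1).
Proof.
  induction l1 as [|a l1 IH]; [reflexivity|].
  change (list_prod (a::l1) l2) with (map (fun y => (a,y)) l2 ++ list_prod l1 l2).
  rewrite map_app, sum_app, map_map. simpl. f_equal. exact IH.
Qed.

Lemma fold_zrange n g : fold_right Rplus 0 (map g (zrange n)) = sZ (- Z.of_nat n) (2*n+1) g.
Proof.
  unfold zrange. replace (- Z.of_nat n)%Z with (Z.of_nat 0 - Z.of_nat n)%Z by lia.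
  generalize (2*n+1)%nat. generalize O.
  intros s len; revert s; induction len; intro s; simpl; auto.
  rewrite IHlen. f_equal. f_equal. lia.
Qed.

Lemma count_box C n : count_in_Q C n = box n (indicator C).
Proof.
  unfold count_in_Q, Q_list.
  rewrite (fold_prod (zrange n) (zrange n) (indicator C)).
  rewrite fold_zrange. unfold box.
  apply sZ_ext; intro. apply fold_zrange.
Qed.

Ltac solve_eq := unfold sh; simpl; f_equal; lia.
Ltac solve_disj := first [ left; solve_eq | right; solve_disj | solve_eq ].

Lemma nbhd_cases u w : closed_nbhd u w ->
  w = sh u 0 0 \/ w = sh u 1 0 \/ w = sh u (-1) 0 \/ w = sh u 0 1 \/ w = sh u 0 (-1)
  \/ w = sh u 1 1 \/ w = sh u (-1) (-1).
Proof.
  destruct u as [x y], w as [x' y']. unfold closed_nbhd, tri_adj. simpl.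
  intros [H|H].
  - injection H; intros; subst. solve_disj.
  - repeat destruct H as [H|H]; injection H; intros; solve_disj.
Qed.

Definition cnt (C : vtx -> Prop) (u : vtx) : R :=
  indicator C (sh u 0 0) + indicator C (sh u 1 0) + indicator C (sh u (-1) 0)
  + indicator C (sh u 0 1) + indicator C (sh u 0 (-1)) + indicator C (sh u 1 1)
  + indicator C (sh u (-1) (-1)).

Lemma ind_nonneg C p : 0 <= indicator C p.
Proof. unfold indicator; destruct excluded_middle_informative; lra. Qed.
Lemma ind_le1 C p : indicator C p <= 1.
Proof. unfold indicator; destruct excluded_middle_informative; lra. Qed.
Lemma ind_in C p : C p -> indicator C p = 1.
Proof. unfold indicator; destruct excluded_middle_informative; tauto. Qed.
Lemma ind_out C p : ~ C p -> indicator C p = 0.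
Proof. unfold indicator; destruct excluded_middle_informative; tauto. Qed.

Ltac cnt_pos C u :=
  pose proof (ind_nonneg C (sh u 0 0)); pose proof (ind_nonneg C (sh u 1 0));
  pose proof (ind_nonneg C (sh u (-1) 0)); pose proof (ind_nonneg C (sh u 0 1));
  pose proof (ind_nonneg C (sh u 0 (-1))); pose proof (ind_nonneg C (sh u 1 1));
  pose proof (ind_nonneg C (sh u (-1) (-1))).

Lemma cnt_ge1 C u p : closed_nbhd u p -> indicator C p <= cnt C u.
Proof.
  intro H. apply nbhd_cases in H. cnt_pos C u. unfold cnt.
  repeat destruct H as [H|H]; subst; lra.
Qed.

Lemma cnt_nonneg C u : 0 <= cnt C u.
Proof. cnt_pos C u. unfold cnt. lra. Qed.

Lemma cnt_ge2 C u p q : closed_nbhd u p -> closed_nbhd u q -> p <> q ->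
  indicator C p + indicator C q <= cnt C u.
Proof.
  intros Hp Hq Hpq. apply nbhd_cases in Hp. apply nbhd_cases in Hq. cnt_pos C u. unfold cnt.
  repeat destruct Hp as [Hp|Hp]; repeat destruct Hq as [Hq|Hq]; subst;
    first [ exfalso; apply Hpq; reflexivity | lra ].
Qed.

Definition wt (C : vtx -> Prop) (u : vtx) : R := / cnt C u.

Lemma wt_nonneg C u : 0 <= wt C u.
Proof.
  unfold wt. destruct (Req_dec (cnt C u) 0) as [E|E].
  - rewrite E, Rinv_0; lra.
  - pose proof (cnt_nonneg C u). apply Rlt_le, Rinv_0_lt_compat. lra.
Qed.

Lemma wt_le1 C u p : C p -> closed_nbhd u p -> wt C u <= 1.
Proof.
  intros Hp Hn. pose proof (cnt_ge1 C u p Hn). rewrite ind_in in H by auto.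
  unfold wt. rewrite <- Rinv_1. apply Rinv_le_contravar; lra.
Qed.

Lemma wt_le_half C u : 2 <= cnt C u -> wt C u <= 1/2.
Proof.
  intros H. unfold wt. unfold Rdiv. rewrite Rmult_1_l. apply Rinv_le_contravar; lra.
Qed.

Lemma nbhd_refl u : closed_nbhd u u.
Proof. left; reflexivity. Qed.

Lemma pair_bound C c u v : local_LD_code C -> C c -> closed_nbhd u c -> closed_nbhd v c ->
  tri_adj u v -> u <> c -> v <> c -> wt C u + wt C v <= 3/2.
Proof.
  intros [_ [_ HLD]] Hc Hu Hv Huv Huc Hvc.
  pose proof (cnt_ge1 C u c Hu) as Gu. pose proof (cnt_ge1 C v c Hv) as Gv.
  rewrite ind_in in Gu, Gv by auto.
  assert (W1 : forall x p, C p -> closed_nbhd x p -> wt C x <= 1) by (intros; eapply wt_le1; eauto).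
  destruct (Rlt_or_le (cnt C u) 2) as [Lu|Lu].
  2:{ pose proof (wt_le_half C u Lu). pose proof (W1 v c Hc Hv). lra. }
  destruct (Rlt_or_le (cnt C v) 2) as [Lv|Lv].
  2:{ pose proof (wt_le_half C v Lv). pose proof (W1 u c Hc Hu). lra. }
  exfalso.
  assert (single : forall x, cnt C x < 2 -> closed_nbhd x c -> forall p, I_set C x p -> p = c).
  { intros x Lx Hx p [Hxp Cp]. destruct (excluded_middle_informative (p = c)) as [E|E]; auto.
    pose proof (cnt_ge2 C x p c Hxp Hx E). rewrite !ind_in in H by auto. lra. }
  assert (ncu : ~ C u).
  { intro Cu. pose proof (cnt_ge2 C u u c (nbhd_refl u) Hu Huc). rewrite !ind_in in H by auto. lra. }
  assert (ncv : ~ C v).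
  { intro Cv. pose proof (cnt_ge2 C v v c (nbhd_refl v) Hv Hvc). rewrite !ind_in in H by auto. lra. }
  apply (HLD u v Huv ncu ncv). intro p. split; intro Hp.
  - rewrite (single u Lu Hu p Hp). split; auto.
  - rewrite (single v Lv Hv p Hp). split; auto.
Qed.

Definition D7 : list (Z*Z) := ((0,0) :: (1,0) :: (-1,0) :: (0,1) :: (0,-1) :: (1,1) :: (-1,-1) :: nil)%Z.

Ltac geo := unfold closed_nbhd, tri_adj, sh; simpl;
  first [ solve_disj | let H := fresh "H" in intro H; injection H; lia ].

Lemma S_bound C c : local_LD_code C -> C c ->
  sumL D7 (fun d => wt C (sh c (- fst d) (- snd d))) <= 11/2.
Proof.
  intros HC Hc. unfold sumL, D7. simpl.
  pose proof (wt_le1 C (sh c 0 0) c Hc ltac:(destruct c; geo)).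
  pose proof (pair_bound C c (sh c 1 0) (sh c 1 1) HC Hc
    ltac:(destruct c; geo) ltac:(destruct c; geo) ltac:(destruct c; geo)
    ltac:(destruct c; geo) ltac:(destruct c; geo)).
  pose proof (pair_bound C c (sh c 0 1) (sh c (-1) 0) HC Hc
    ltac:(destruct c; geo) ltac:(destruct c; geo) ltac:(destruct c; geo)
    ltac:(destruct c; geo) ltac:(destruct c; geo)).
  pose proof (pair_bound C c (sh c (-1) (-1)) (sh c 0 (-1)) HC Hc
    ltac:(destruct c; geo) ltac:(destruct c; geo) ltac:(destruct c; geo)
    ltac:(destruct c; geo) ltac:(destruct c; geo)).
  lra.
Qed.

Lemma sumL_le L f g : (forall d, In d L -> f d <= g d) -> sumL L f <= sumL L g.
Proof.
  induction L; intro H; unfold sumL; simpl. lra.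
  pose proof (H a (or_introl eq_refl)). pose proof (IHL (fun d Hd => H d (or_intror Hd))).
  unfold sumL in *. lra.
Qed.

Lemma sh_sh u a b : sh (sh u a b) (-a) (-b) = u.
Proof. destruct u; unfold sh; simpl; f_equal; lia. Qed.

Lemma lower_count C n : local_LD_code C -> card_Q n <= 11/2 * count_in_Q C (S n).
Proof.
  intros HC.
  assert (E1 : card_Q n = box n (fun u => sumL D7 (fun d => indicator C (sh u (fst d) (snd d)) * wt C u))).
  { unfold card_Q. rewrite <- (Rmult_1_r (INR (2*n+1) ^ 2)), <- box_const.
    apply box_ext; intro u.
    destruct HC as [_ [Hd _]]. destruct (Hd u) as [p [Hp Cp]].
    pose proof (cnt_ge1 C u p Hp). rewrite ind_in in H by auto.
    unfold sumL, D7, wt; simpl.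
    replace (indicator C (sh u 0 0) * / cnt C u + (indicator C (sh u 1 0) * / cnt C u +
      (indicator C (sh u (-1) 0) * / cnt C u + (indicator C (sh u 0 1) * / cnt C u +
      (indicator C (sh u 0 (-1)) * / cnt C u + (indicator C (sh u 1 1) * / cnt C u +
      (indicator C (sh u (-1) (-1)) * / cnt C u + 0)))))))
      with (cnt C u * / cnt C u) by (unfold cnt; ring).
    rewrite Rinv_r; lra. }
  rewrite E1, box_sumL.
  apply Rle_trans with (sumL D7 (fun d => box (S n) (fun c => indicator C c * wt C (sh c (- fst d) (- snd d))))).
  { apply sumL_le. intros d Hd.
    rewrite (box_ext n _ (fun u => (fun c => indicator C c * wt C (sh c (- fst d) (- snd d))) (sh u (fst d) (snd d)))).
    2:{ intro u. simpl. rewrite sh_sh. reflexivity. }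
    apply (box_shift_le n (fun c => indicator C c * wt C (sh c (- fst d) (- snd d))) (fst d) (snd d)).
    - intro; apply Rmult_le_pos; [apply ind_nonneg | apply wt_nonneg].
    - simpl in Hd. repeat destruct Hd as [Hd|Hd]; subst; simpl; lia.
    - simpl in Hd. repeat destruct Hd as [Hd|Hd]; subst; simpl; lia. }
  rewrite <- (box_sumL (S n) D7 (fun d c => indicator C c * wt C (sh c (- fst d) (- snd d)))).
  rewrite count_box, <- box_scal. apply box_le. intro c.
  destruct (excluded_middle_informative (C c)) as [Cc|Cc].
  - rewrite ind_in by auto. pose proof (S_bound C c HC Cc). unfold sumL, D7 in *. simpl in *. lra.
  - rewrite ind_out by auto. unfold sumL, D7; simpl. lra.
Qed.

Lemma part1 C : local_LD_code C -> Rbar_le (Finite (2 / 11)) (density C).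
Proof.
  intro HC. unfold density.
  apply Rbar_le_trans with (LimSup_seq (fun n => 2/11 + (-8/11) * / INR (2*n+1))).
  { rewrite (is_LimSup_seq_unique _ _ (is_lim_LimSup_seq _ _ (lim_aux _ _))). simpl; lra. }
  apply LimSup_le. exists 1%nat. intros m Hm. destruct m as [|n]; [lia|].
  pose proof (lower_count C n HC) as Hc.
  unfold card_Q in *.
  set (K := INR (2*n+1)) in *.
  assert (HK : 1 <= K) by (unfold K; replace 1 with (INR 1) by reflexivity; apply le_INR; lia).
  replace (INR (2 * S n + 1)) with (K + 2)
    by (unfold K; replace (2 * S n + 1)%nat with (2*n+1+2)%nat by lia; rewrite (plus_INR (2*n+1) 2); replace (INR 2) with 2 by (simpl; lra); ring).
  set (X := count_in_Q C (S n)) in *.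
  assert (E : 2/11 + -8/11 * / (K+2) = (2/11 * (K+2)^2 - 8/11 * (K+2)) * / (K+2)^2)
    by (field; lra).
  rewrite E. unfold Rdiv. apply Rmult_le_compat_r.
  - apply Rlt_le, Rinv_0_lt_compat. apply pow_lt. lra.
  - assert (K^2 = K*K) by ring. assert ((K+2)^2 = K*K + 4*K + 4) by ring. nra.
Qed.

Definition C2 (p : vtx) : Prop :=
  ((snd p + 2 * fst p) mod 9 = 0)%Z \/ ((snd p + 2 * fst p) mod 9 = 3)%Z.
Definition res (u : vtx) : Z := ((snd u + 2 * fst u) mod 9)%Z.
Definition C2b (r a b : Z) : bool :=
  orb ((r + b + 2*a) mod 9 =? 0)%Z ((r + b + 2*a) mod 9 =? 3)%Z.

Lemma C2_sh u a b : C2 (sh u a b) <-> C2b (res u) a b = true.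
Proof.
  unfold C2, C2b, res, sh; cbn [fst snd].
  assert (E : ((snd u + b + 2 * (fst u + a)) mod 9 = ((snd u + 2 * fst u) mod 9 + b + 2 * a) mod 9)%Z).
  { replace ((snd u + 2 * fst u) mod 9 + b + 2 * a)%Z with ((snd u + 2 * fst u) mod 9 + (b + 2 * a))%Z by ring.
    rewrite Z.add_mod_idemp_l by lia. f_equal. ring. }
  rewrite E, Bool.orb_true_iff, !Z.eqb_eq. tauto.
Qed.

Lemma sh0 u : sh u 0 0 = u.
Proof. destruct u; unfold sh; simpl; f_equal; ring. Qed.

Lemma C2_u u : C2 u <-> C2b (res u) 0 0 = true.
Proof. rewrite <- C2_sh, sh0. tauto. Qed.

Ltac nonadj u := let H := fresh "H" in intro H; apply nbhd_cases in H;
  repeat destruct H as [H|H]; unfold sh in H; destruct u; simpl in H; injection H; lia.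

Ltac dom_at u Er a b := exists (sh u a b); split;
  [ destruct u; geo | apply C2_sh; rewrite Er; reflexivity ].

Ltac wit u v HI Er a b :=
  let Cw := fresh "Cw" in let N1 := fresh "N1" in let N2 := fresh "N2" in
  assert (Cw : C2 (sh u a b)) by (apply C2_sh; rewrite Er; reflexivity);
  first [ assert (N1 : closed_nbhd u (sh u a b)) by (destruct u; geo);
          assert (N2 : ~ closed_nbhd v (sh u a b)) by nonadj u;
          destruct (proj1 (HI (sh u a b)) (conj N1 Cw)); contradiction
        | assert (N1 : closed_nbhd v (sh u a b)) by (destruct u; geo);
          assert (N2 : ~ closed_nbhd u (sh u a b)) by nonadj u;
          destruct (proj2 (HI (sh u a b)) (conj N1 Cw)); contradiction ].

Ltac allwit u v HI Er :=
  first [ wit u v HI Er 0%Z 0%Z | wit u v HI Er 1%Z 0%Z | wit u v HI Er (-1)%Z 0%Z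
        | wit u v HI Er 0%Z 1%Z | wit u v HI Er 0%Z (-1)%Z | wit u v HI Er 1%Z 1%Z
        | wit u v HI Er (-1)%Z (-1)%Z
        | wit u v HI Er 2%Z 0%Z | wit u v HI Er (-2)%Z 0%Z | wit u v HI Er 0%Z 2%Z
        | wit u v HI Er 0%Z (-2)%Z | wit u v HI Er 2%Z 2%Z | wit u v HI Er (-2)%Z (-2)%Z
        | wit u v HI Er 2%Z 1%Z | wit u v HI Er 1%Z 2%Z | wit u v HI Er (-2)%Z (-1)%Z
        | wit u v HI Er (-1)%Z (-2)%Z | wit u v HI Er 1%Z (-1)%Z | wit u v HI Er (-1)%Z 1%Z
        | wit u v HI Er 2%Z (-1)%Z | wit u v HI Er (-1)%Z 2%Z | wit u v HI Er 1%Z (-2)%Z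
        | wit u v HI Er (-2)%Z 1%Z ].

Lemma LD2 : local_LD_code C2.
Proof.
  split; [exists (0%Z,0%Z); left; reflexivity|]. split.
  - intro u. assert (Hr : (0 <= res u < 9)%Z) by (unfold res; apply Z.mod_pos_bound; lia).
    assert (res u = 0 \/ res u = 1 \/ res u = 2 \/ res u = 3 \/ res u = 4 \/ res u = 5
      \/ res u = 6 \/ res u = 7 \/ res u = 8)%Z as Hc by lia.
    repeat destruct Hc as [Er|Hc];
      try rename Hc into Er;
      first [ dom_at u Er 0%Z 0%Z | dom_at u Er 1%Z 0%Z | dom_at u Er (-1)%Z 0%Z
            | dom_at u Er 0%Z 1%Z | dom_at u Er 0%Z (-1)%Z | dom_at u Er 1%Z 1%Z
            | dom_at u Er (-1)%Z (-1)%Z ].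
  - intros u v Huv Hu Hv HI.
    assert (Hn : closed_nbhd u v) by (right; exact Huv).
    apply nbhd_cases in Hn.
    assert (Hr : (0 <= res u < 9)%Z) by (unfold res; apply Z.mod_pos_bound; lia).
    assert (res u = 0 \/ res u = 1 \/ res u = 2 \/ res u = 3 \/ res u = 4 \/ res u = 5
      \/ res u = 6 \/ res u = 7 \/ res u = 8)%Z as Hc by lia.
    rewrite C2_u in Hu.
    repeat destruct Hn as [Hn|Hn]; subst v;
    [ exfalso; unfold tri_adj, sh in Huv; destruct u; simpl in Huv;
      repeat destruct Huv as [Huv|Huv]; injection Huv; lia | .. ];
    rewrite C2_sh in Hv;
    repeat destruct Hc as [Er|Hc]; try rename Hc into Er; rewrite Er in Hu, Hv;
    first [ exfalso; apply Hu; reflexivity | exfalso; apply Hv; reflexivity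
          | match type of HI with forall w, I_set _ ?u' w <-> I_set _ ?v' w => allwit u v' HI Er end ].
Qed.

Definition fb (m : Z) : R := if orb (m =? 0)%Z (m =? 3)%Z then 1 else 0.
Definition h9 (t : Z) : R := fb (t mod 9).

Lemma ind2 p : indicator C2 p = h9 (snd p + 2 * fst p).
Proof.
  unfold indicator, h9, fb, C2.
  destruct excluded_middle_informative as [H|H];
  destruct (Z.eqb_spec ((snd p + 2 * fst p) mod 9) 0);
  destruct (Z.eqb_spec ((snd p + 2 * fst p) mod 9) 3); simpl; tauto.
Qed.

Lemma h9_bounds t : 0 <= h9 t <= 1.
Proof. unfold h9, fb. destruct orb; lra. Qed.

Lemma sum9 z : sZ z 9 h9 = 2.
Proof.
  assert (Hz : z = (z mod 9 + (z / 9) * 9)%Z) by (pose proof (Z.div_mod z 9); lia).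
  rewrite Hz, <- sZ_shift.
  rewrite (sZ_ext _ _ _ h9).
  2:{ intro t. unfold h9. rewrite Z_mod_plus_full. reflexivity. }
  assert (Hr : (0 <= z mod 9 < 9)%Z) by (apply Z.mod_pos_bound; lia).
  assert (z mod 9 = 0 \/ z mod 9 = 1 \/ z mod 9 = 2 \/ z mod 9 = 3 \/ z mod 9 = 4 \/ z mod 9 = 5
      \/ z mod 9 = 6 \/ z mod 9 = 7 \/ z mod 9 = 8)%Z as Hc by lia.
  repeat destruct Hc as [E|Hc]; try rename Hc into E; rewrite E; simpl sZ; unfold h9, fb; simpl; lra.
Qed.

Lemma sum9q z q : sZ z (9*q) h9 = 2 * INR q.
Proof.
  revert z; induction q; intro z. simpl. lra.
  replace (9 * S q)%nat with (9 + 9*q)%nat by lia.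
  rewrite sZ_split, sum9, IHq, S_INR. lra.
Qed.

Lemma row_bounds z L : 2 * (INR L - 8) / 9 <= sZ z L h9 <= 2 * INR L / 9 + 8.
Proof.
  pose (q := (L / 9)%nat). pose (r := (L mod 9)%nat).
  assert (HL : L = (9*q + r)%nat) by (unfold q, r; pose proof (Nat.div_mod_eq L 9); lia).
  assert (Hr : (r < 9)%nat) by (unfold r; apply Nat.mod_upper_bound; lia).
  assert (Hr' : INR r <= 8) by (replace 8 with (INR 8) by (simpl; lra); apply le_INR; lia).
  rewrite HL, sZ_split, sum9q, plus_INR, mult_INR.
  pose proof (sZ_nonneg (z + Z.of_nat (9*q))%Z r h9 (fun t => proj1 (h9_bounds t))).
  pose proof (sZ_le (z + Z.of_nat (9*q))%Z r h9 (fun _ => 1) (fun t => proj2 (h9_bounds t))).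
  rewrite sZ_const in H0.
  replace (INR 9) with 9 by (simpl; lra). lra.
Qed.

Lemma part2 : density C2 = Finite (2 / 9).
Proof.
  unfold density. apply is_LimSup_seq_unique, is_lim_LimSup_seq.
  apply is_lim_seq_le_le with (u := fun n => 2/9 + (-16/9) * / INR (2*n+1))
                              (w := fun n => 2/9 + 8 * / INR (2*n+1));
    [| apply lim_aux | apply lim_aux].
  intro n. rewrite count_box. unfold card_Q, box.
  set (L := (2*n+1)%nat).
  assert (HL : 1 <= INR L) by (replace 1 with (INR 1) by reflexivity; apply le_INR; unfold L; lia).
  rewrite (sZ_ext _ _ _ (fun i => sZ (- Z.of_nat n + 2 * i) L h9)).
  2:{ intro i. rewrite <- (sZ_shift (- Z.of_nat n) L (2*i) h9). apply sZ_ext. intro j. rewrite ind2. reflexivity. }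
  set (X := sZ (- Z.of_nat n) L (fun i => sZ (- Z.of_nat n + 2 * i) L h9)).
  assert (Lo : INR L * (2 * (INR L - 8) / 9) <= X).
  { rewrite <- (sZ_const (- Z.of_nat n) L). apply sZ_le. intro. apply row_bounds. }
  assert (Hi : X <= INR L * (2 * INR L / 9 + 8)).
  { rewrite <- (sZ_const (- Z.of_nat n) L). apply sZ_le. intro. apply row_bounds. }
  set (K := INR L) in *.
  assert (E1 : 2/9 + -16/9 * / K = (K * (2 * (K - 8) / 9)) * / K^2) by (field; lra).
  assert (E2 : 2/9 + 8 * / K = (K * (2 * K / 9 + 8)) * / K^2) by (field; lra).
  assert (P : 0 <= / K^2) by (apply Rlt_le, Rinv_0_lt_compat, pow_lt; lra).
  rewrite E1, E2. unfold Rdiv at 3. split; apply Rmult_le_compat_r; lra.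
Qed.

Theorem mainTheorem15 :
  (forall C : vtx -> Prop, local_LD_code C -> Rbar_le (Finite (2 / 11)) (density C))
  /\ (exists C : vtx -> Prop, local_LD_code C /\ density C = Finite (2 / 9)).
Proof.
  split.
  - exact part1.
  - exists C2. split; [exact LD2 | exact part2].
Qed.
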